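(* Consider two sets of matrices $\mathbf{A}_1, \dots, \mathbf{A}_s$ and $\hat{\mathbf{A}}_1, \dots, \hat{\mathbf{A}}_s$ with $\|\mathbf{A}_i - \hat{\mathbf{A}}_i\| \leq \epsilon_{\mathbf{A}}$ for all $i \in [s]$. Assume there exists a pair $\{\xi, \kappa\}$ such that for all $t \in \mathbb{N}$, $\max_{\sigma_{1:t} \in [s]^{t}}\|\mathbf{A}_{\sigma_1} \cdots \mathbf{A}_{\sigma_t}\| \leq \kappa \xi^t$. Then, for all $t$ and any sequence $\sigma_{1:t} \in [s]^{t}$, we have (i) $\|\prod_{h=1}^t \hat{\mathbf{A}}_{\sigma_h}\| \leq \kappa (\kappa \epsilon_{\mathbf{A}} + \xi)^t$; (ii) $\|\prod_{h=1}^t \hat{\mathbf{A}}_{\sigma_h} - \prod_{h=1}^t \mathbf{A}_{\sigma_h}\| \leq \kappa^2 t (\kappa \epsilon_{\mathbf{A}} + \xi)^{t-1} \epsilon_{\mathbf{A}}$. *)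

(* Defs.v *)
From HB Require Import structures.
From mathcomp Require Import all_boot all_order all_algebra.
From mathcomp Require Import boolp classical_sets reals.
Set Implicit Arguments. Unset Strict Implicit. Unset Printing Implicit Defensive.
Import Order.TTheory GRing.Theory Num.Theory.
Local Open Scope ring_scope.
Local Open Scope classical_set_scope.

Definition vnorm2 {R : realType} {n : nat} (x : 'cV[R]_n) : R :=
  Num.sqrt (\sum_(i < n) (x i 0) ^+ 2).

Definition opnorm {R : realType} {n : nat} (A : 'M[R]_n) : R :=
  sup [set vnorm2 (A *m x) | x in [set x : 'cV[R]_n | vnorm2 x <= 1]].

Definition mxprod {R : realType} {n : nat} (Ms : seq 'M[R]_n) : 'M[R]_n :=
  foldr (fun M P => M *m P) 1%:M Ms.

(* Main.v *)
Require Import Defs.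
From HB Require Import structures.
From mathcomp Require Import all_boot all_order all_algebra.
From mathcomp Require Import boolp classical_sets reals.
From mathcomp Require Import ring lra.
Import Order.TTheory GRing.Theory Num.Theory.
Local Open Scope ring_scope.
Set Implicit Arguments. Unset Strict Implicit.

Section VN.
Variables (R : realType) (n : nat).
Implicit Types (x y : 'cV[R]_n).

Lemma sumsq_ge0 x : 0 <= \sum_(i < n) (x i 0) ^+ 2.
Proof. by apply: sumr_ge0 => i _; rewrite sqr_ge0. Qed.

Lemma vnorm2_ge0 x : 0 <= vnorm2 x.
Proof. exact: sqrtr_ge0. Qed.

Lemma vnorm2_eq0 x : vnorm2 x = 0 -> x = 0.
Proof.
move=> /eqP; rewrite /vnorm2 sqrtr_eq0 => h.
have h0 : \sum_(i < n) (x i 0) ^+ 2 = 0 by apply/eqP; rewrite eq_le h sumsq_ge0.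
have := psumr_eq0P (fun i _ => sqr_ge0 (x i 0)) h0 => H.
apply/matrixP => i j; rewrite ord1 mxE; apply/eqP.
by rewrite -sqrf_eq0 H.
Qed.

Lemma vnorm2_0 : vnorm2 (0 : 'cV[R]_n) = 0.
Proof. by rewrite /vnorm2 big1 ?sqrtr0 // => i _; rewrite mxE expr0n. Qed.

Lemma vnorm2Z (c : R) x : vnorm2 (c *: x) = `|c| * vnorm2 x.
Proof.
rewrite /vnorm2 (eq_bigr (fun i => c ^+ 2 * (x i 0) ^+ 2)); last first.
  by move=> i _; rewrite mxE exprMn.
by rewrite -mulr_sumr sqrtrM ?sqr_ge0 // sqrtr_sqr.
Qed.

Lemma vnorm2N x : vnorm2 (- x) = vnorm2 x.
Proof. by rewrite -scaleN1r vnorm2Z normrN normr1 mul1r. Qed.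

Lemma cauchy_schwarz x y :
  \sum_(i < n) x i 0 * y i 0 <= vnorm2 x * vnorm2 y.
Proof.
set a := \sum_(i < n) (x i 0) ^+ 2; set b := \sum_(i < n) (y i 0) ^+ 2.
set c := \sum_(i < n) x i 0 * y i 0.
set u := vnorm2 x; set v := vnorm2 y.
have u0 : 0 <= u := vnorm2_ge0 x. have v0 : 0 <= v := vnorm2_ge0 y.
have ua : u ^+ 2 = a by rewrite sqr_sqrtr // sumsq_ge0.
have vb : v ^+ 2 = b by rewrite sqr_sqrtr // sumsq_ge0.
have H : 0 <= \sum_(i < n) (v * x i 0 - u * y i 0) ^+ 2.
  by apply: sumr_ge0 => i _; rewrite sqr_ge0.
have E : \sum_(i < n) (v * x i 0 - u * y i 0) ^+ 2 =
   v ^+ 2 * a - 2 * (u * v) * c + u ^+ 2 * b.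
  rewrite /a /b /c mulr_sumr mulr_sumr mulr_sumr -sumrB -big_split /=.
  by apply: eq_bigr => i _; ring.
rewrite E ua vb in H.
have [uv0|] := ltrP 0 (u * v).
  have : (u * v) * c <= (u * v) * (u * v).
    have -> : (u * v) * (u * v) = a * b by rewrite -ua -vb; ring.
    nra.
  by rewrite ler_pM2l.
rewrite le_eqVlt ltNge mulr_ge0 // orbF mulf_eq0 => /orP[]/eqP e.
  rewrite /c (vnorm2_eq0 e) e mul0r.
  by rewrite big1 // => i _; rewrite mxE mul0r.
rewrite /c (vnorm2_eq0 e) e mulr0.
by rewrite big1 // => i _; rewrite mxE mulr0.
Qed.

Lemma vnorm2D x y : vnorm2 (x + y) <= vnorm2 x + vnorm2 y.
Proof.
have u0 := vnorm2_ge0 x; have v0 := vnorm2_ge0 y.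
rewrite -(ger0_norm (addr_ge0 u0 v0)) -sqrtr_sqr /vnorm2 ler_sqrt ?sqr_ge0 //.
have -> : \sum_(i < n) ((x + y) i 0) ^+ 2 =
  \sum_(i < n) (x i 0) ^+ 2 + 2 * \sum_(i < n) x i 0 * y i 0 + \sum_(i < n) (y i 0) ^+ 2.
  rewrite mulr_sumr -!big_split /=; apply: eq_bigr => i _; rewrite mxE; ring.
have := cauchy_schwarz x y; rewrite /vnorm2.
rewrite sqrrD !sqr_sqrtr ?sumsq_ge0 //.
set a := \sum_(i < n) _ ^+ 2; set b := \sum_(i < n) _ ^+ 2; lra.
Qed.
End VN.

Section OP.
Local Open Scope classical_set_scope.
Variables (R : realType) (n : nat).
Implicit Types (x y : 'cV[R]_n) (M N : 'M[R]_n).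

Lemma cs_sqr x y :
  (\sum_(i < n) x i 0 * y i 0) ^+ 2 <= vnorm2 x ^+ 2 * vnorm2 y ^+ 2.
Proof.
have h1 := cauchy_schwarz x y.
have h2 := cauchy_schwarz x (- y).
rewrite vnorm2N in h2.
have e : \sum_(i < n) x i 0 * (- y) i 0 = - \sum_(i < n) x i 0 * y i 0.
  by rewrite -sumrN; apply: eq_bigr => i _; rewrite mxE mulrN.
rewrite e in h2.
have := vnorm2_ge0 x; have := vnorm2_ge0 y.
set c := \sum_(i < n) _; set u := vnorm2 x; set v := vnorm2 y.
move=> v0 u0; rewrite -exprMn.
have h3 : 0 <= (u * v - c) * (u * v + c).
  by apply: mulr_ge0; [rewrite subr_ge0 | rewrite -lerBlDr sub0r].
rewrite -subr_ge0; apply: (le_trans h3); rewrite le_eqVlt; apply/orP; left.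
apply/eqP; ring.
Qed.

Definition opS M := [set vnorm2 (M *m x) | x in [set x : 'cV[R]_n | vnorm2 x <= 1]].

Lemma opS_has_sup M : has_sup (opS M).
Proof.
split; first by exists 0; exists 0; rewrite /= ?vnorm2_0 ?mulmx0 ?vnorm2_0.
exists (Num.sqrt (\sum_(i < n) vnorm2 (row i M)^T ^+ 2)).
move=> _ [x /= hx <-].
rewrite /vnorm2 ler_sqrt; last by apply: sumr_ge0 => i _; rewrite sqr_ge0.
apply: ler_sum => i _.
have -> : (M *m x) i 0 = \sum_(j < n) (row i M)^T j 0 * x j 0.
  by rewrite mxE; apply: eq_bigr => j _; rewrite !mxE.
apply: (le_trans (cs_sqr _ _)).
rewrite -[X in _ <= X]mulr1 ler_wpM2l ?sqr_ge0 //.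
have := vnorm2_ge0 x; move: hx; rewrite /vnorm2; nra.
Qed.

Lemma opnorm_ub M x : vnorm2 x <= 1 -> vnorm2 (M *m x) <= opnorm M.
Proof. by move=> hx; apply: (sup_upper_bound (opS_has_sup M)); exists x. Qed.

Lemma opnorm_ge0 M : 0 <= opnorm M.
Proof.
have := opnorm_ub M (x := 0); rewrite mulmx0 vnorm2_0; apply; exact: ler01.
Qed.

Lemma opnorm_le M c : (forall x, vnorm2 x <= 1 -> vnorm2 (M *m x) <= c) ->
  opnorm M <= c.
Proof.
move=> h; apply: ge_sup; first by exists 0; exists 0; rewrite /= ?mulmx0 vnorm2_0.
by move=> _ [x hx <-]; apply: h.
Qed.

Lemma opnorm_vec M x : vnorm2 (M *m x) <= opnorm M * vnorm2 x.
Proof.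
have [e|nz] := eqVneq (vnorm2 x) 0.
  by rewrite e mulr0 (vnorm2_eq0 e) mulmx0 vnorm2_0.
have p : 0 < vnorm2 x by rewrite lt_def nz vnorm2_ge0.
have h := opnorm_ub M (x := (vnorm2 x)^-1 *: x).
rewrite vnorm2Z -scalemxAr vnorm2Z ger0_norm ?invr_ge0 ?vnorm2_ge0 // in h.
rewrite mulVf // lexx in h.
have h' := h isT.
by rewrite mulrC ler_pdivrMr // in h'.
Qed.

Lemma opnorm_mul M N : opnorm (M *m N) <= opnorm M * opnorm N.
Proof.
apply: opnorm_le => x hx; rewrite -mulmxA.
apply: (le_trans (opnorm_vec M _)).
apply: ler_wpM2l; first exact: opnorm_ge0.
apply: (le_trans (opnorm_vec N _)).
rewrite -[X in _ <= X]mulr1; apply: ler_wpM2l => //; exact: opnorm_ge0.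
Qed.

Lemma opnorm_add M N : opnorm (M + N) <= opnorm M + opnorm N.
Proof.
apply: opnorm_le => x hx; rewrite mulmxDl.
apply: (le_trans (vnorm2D _ _)); apply: lerD; exact: opnorm_ub.
Qed.

Lemma opnorm_opp M : opnorm (- M) = opnorm M.
Proof.
have h : forall M, opnorm (- M) <= opnorm M.
  move=> P; apply: opnorm_le => x hx; rewrite mulNmx vnorm2N; exact: opnorm_ub.
apply/eqP; rewrite eq_le h /=; have := h (- M); by rewrite opprK.
Qed.

Lemma opnorm0 : opnorm (0 : 'M[R]_n) = 0.
Proof.
apply/eqP; rewrite eq_le opnorm_ge0 andbT.
by apply: opnorm_le => x _; rewrite mul0mx vnorm2_0.
Qed.
End OP.

Lemma mxprod_cat (R : realType) (n : nat) (s1 s2 : seq 'M[R]_n) :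
  mxprod (s1 ++ s2) = mxprod s1 *m mxprod s2.
Proof.
elim: s1 => [|M s1 IH] /=; first by rewrite mul1mx.
by rewrite IH mulmxA.
Qed.

Lemma opnorm_mul3 (R : realType) (n : nat) (X Y Z : 'M[R]_n) a b c :
  opnorm X <= a -> opnorm Y <= b -> opnorm Z <= c ->
  opnorm (X *m Y *m Z) <= a * b * c.
Proof.
move=> hX hY hZ; apply: (le_trans (opnorm_mul _ _)).
apply: ler_pM; [exact: opnorm_ge0 | exact: opnorm_ge0 | | exact: hZ].
apply: (le_trans (opnorm_mul _ _)).
by apply: ler_pM; [exact: opnorm_ge0 | exact: opnorm_ge0 | |].
Qed.

Lemma opnorm_subr (R : realType) (n : nat) (X Y : 'M[R]_n) :
  opnorm (X - Y) <= opnorm X + opnorm Y.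
Proof. by rewrite -(opnorm_opp Y); apply: opnorm_add. Qed.

Section Main.
Variables (R : realType) (n s : nat) (A Ahat : 'I_s -> 'M[R]_n).
Variables (eps xi kappa : R).
Hypothesis hD : forall i, opnorm (A i - Ahat i) <= eps.
Let P (l : seq 'I_s) := mxprod [seq A i | i <- l].
Let Q (l : seq 'I_s) := mxprod [seq Ahat i | i <- l].
Hypothesis hP : forall l, opnorm (P l) <= kappa * xi ^+ size l.
Hypotheses (k0 : 0 <= kappa) (x0 : 0 <= xi) (e0 : 0 <= eps).
Let r := kappa * eps + xi.

Lemma P_rcons p a : P (p ++ [:: a]) = P p *m A a.
Proof. by rewrite /P map_cat mxprod_cat /= mulmx1. Qed.

Lemma boundG l : forall p, opnorm (P p *m Q l) <= kappa * xi ^+ size p * r ^+ size l.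
Proof.
elim: l => [|a l IH] p.
  by rewrite /Q /= mulmx1 expr0 mulr1.
have -> : P p *m Q (a :: l) = P (p ++ [:: a]) *m Q l - P p *m (A a - Ahat a) *m Q l.
  by rewrite P_rcons /Q /= -!mulmxA -mulmxBr -mulmxBl subKr.
apply: (le_trans (opnorm_subr _ _)).
have h1 := IH (p ++ [:: a]).
have hQ : opnorm (Q l) <= kappa * r ^+ size l.
  by have := IH [::]; rewrite /P /= mul1mx expr0 mulr1.
have h2 := opnorm_mul3 (hP p) (hD a) hQ.
rewrite size_cat /= addn1 in h1.
apply: (le_trans (lerD h1 h2)).
rewrite /= !exprS /r; rewrite le_eqVlt; apply/orP; left; apply/eqP; ring.
Qed.

Lemma boundH l : forall p, opnorm (P p *m (Q l - P l)) <=
  kappa ^+ 2 * xi ^+ size p * (size l)%:R * r ^+ (size l).-1 * eps.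
Proof.
elim: l => [|a l IH] p.
  by rewrite /Q /P /= subrr mulmx0 opnorm0 ?mulr0 ?mul0r.
have -> : P p *m (Q (a :: l) - P (a :: l)) =
   P (p ++ [:: a]) *m (Q l - P l) - P p *m (A a - Ahat a) *m Q l.
  rewrite P_rcons /Q /P /= -!mulmxA -mulmxBr; congr (_ *m _).
  rewrite mulmxBr mulmxBl.
  set u := A a *m mxprod [seq Ahat i | i <- l]; set v := Ahat a *m _; set w := A a *m _.
  by rewrite opprB [_ + (v - u)]addrC addrA subrK.
apply: (le_trans (opnorm_subr _ _)).
have h1 := IH (p ++ [:: a]).
have hQ : opnorm (Q l) <= kappa * r ^+ size l.
  by have := boundG l [::]; rewrite /P /= mul1mx expr0 mulr1.
have h2 := opnorm_mul3 (hP p) (hD a) hQ.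
rewrite size_cat /= addn1 in h1.
apply: (le_trans (lerD h1 h2)).
have xr : xi <= r by rewrite /r lerDr mulr_ge0.
have r0 : 0 <= r by rewrite /r addr_ge0 ?mulr_ge0.
have key : xi * r ^+ (size l).-1 * (size l)%:R <= r ^+ size l * (size l)%:R.
  case: (size l) => [|m]; first by rewrite !mulr0.
  rewrite /= exprS; apply: ler_wpM2r => //; apply: ler_wpM2r => //.
  exact: exprn_ge0.
have kk : 0 <= kappa ^+ 2 * xi ^+ size p * eps.
  by rewrite !mulr_ge0 ?exprn_ge0.
have key2 := ler_wpM2l kk key.
set m := (size l)%:R in key key2 *.
set K := kappa ^+ 2 * xi ^+ size p * eps in kk key2 *.
have E1 : kappa ^+ 2 * xi ^+ (size p).+1 * m * r ^+ (size l).-1 * eps =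
    K * (xi * r ^+ (size l).-1 * m).
  by rewrite /K (exprS xi); ring.
have E2 : kappa * xi ^+ size p * eps * (kappa * r ^+ size l) = K * r ^+ size l.
  by rewrite /K; ring.
have E3 : (size (a :: l))%:R = m + 1 :> R by rewrite /m /= -addn1 natrD.
rewrite E1 E2 E3 /=.
have -> : kappa ^+ 2 * xi ^+ size p * (m + 1) * r ^+ size l * eps =
   K * (r ^+ size l * m) + K * r ^+ size l by rewrite /K; ring.
exact: lerD key2 (lexx _).
Qed.
End Main.

Unset Implicit Arguments. Set Strict Implicit.

Theorem lemma10 (R : realType) (n s : nat) (A Ahat : 'I_s -> 'M[R]_n)
    (epsA xi kappa : R) :
  (forall i : 'I_s, opnorm (A i - Ahat i) <= epsA) ->
  (forall (t : nat) (sigma : t.-tuple 'I_s),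
      opnorm (mxprod [seq A i | i <- sigma]) <= kappa * xi ^+ t) ->
  forall (t : nat) (sigma : t.-tuple 'I_s),
    opnorm (mxprod [seq Ahat i | i <- sigma]) <= kappa * (kappa * epsA + xi) ^+ t
    /\
    opnorm (mxprod [seq Ahat i | i <- sigma] - mxprod [seq A i | i <- sigma])
      <= kappa ^+ 2 * t%:R * (kappa * epsA + xi) ^+ t.-1 * epsA.
Proof.
move=> hD hP t sigma.
have hP' : forall l : seq 'I_s,
    opnorm (mxprod [seq A i | i <- l]) <= kappa * xi ^+ size l.
  by move=> l; exact: (hP _ (in_tuple l)).
have k0 : 0 <= kappa.
  have := hP' [::]; rewrite /= expr0 mulr1; apply: le_trans; exact: opnorm_ge0.
case: t sigma => [|t] sigma.
  rewrite (tuple0 sigma) /=; split.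
    by have := hP' [::]; rewrite /= !expr0.
  by rewrite subrr opnorm0 ?mulr0 ?mul0r.
set i0 := thead sigma.
have e0 : 0 <= epsA by apply: le_trans (hD i0); exact: opnorm_ge0.
have kx : 0 <= kappa * xi.
  by apply: le_trans (hP' [:: i0]); exact: opnorm_ge0.
move: k0; rewrite le_eqVlt => /orP[/eqP kz|kp].
  have h1 : opnorm (1%:M : 'M[R]_n) <= 0.
    by have := hP' [::]; rewrite /= -kz mul0r.
  have allz : forall M : 'M[R]_n, opnorm M <= 0.
    move=> M; rewrite -(mulmx1 M); apply: le_trans (opnorm_mul _ _) _.
    by apply: mulr_ge0_le0 => //; exact: opnorm_ge0.
  by rewrite -kz expr2 !mul0r; split; apply: allz.
have x0 : 0 <= xi by rewrite -(pmulr_rge0 _ kp).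
split.
  have := boundG hD hP' sigma [::].
  by rewrite /= mul1mx expr0 mulr1 size_tuple.
have := boundH hD hP' (ltW kp) x0 e0 sigma [::].
by rewrite /= mul1mx expr0 mulr1 size_tuple.
Qed.
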